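(* Let $G$ be a connected $(c,d)$-biregular simple graph with $n$ vertices and $m$ edges, and let $\lambda_1\ge\lambda_2\ge\cdots\ge\lambda_n$ be its adjacency eigenvalues (so $\lambda_1=\sqrt{cd}$). Then the Kemeny's constant of the simple random walk on the edge space of $G$ is \[ \mathscr{K}_e(G)=2m-n+\sum_{i=2}^{n}\frac{\sqrt{cd}}{\sqrt{cd}-\lambda_i}. \]
   Context: A $(c,d)$-biregular graph is a bipartite graph in which every vertex in one part of the bipartition has degree $c$ and every vertex in the other part has degree $d$. Kemeny's constant of an irreducible finite Markov chain with transition matrix $P$ whose eigenvalues (with multiplicity) are $1=\rho_1,\rho_2,\dots,\rho_N$ (with $1$ simple) is $\mathscr{K}(P)=\sum_{i=2}^{N}\frac{1}{1-\rho_i}$. $\mathscr{K}_e(G)$ is Kemeny's constant of the simple random walk on the arcs of $G$ (the ordered pairs $(u,v)$ with $\{u,v\}$ an edge), where from $(u,v)$ one moves to $(v,w)$ with probability $1/\deg(v)$ for each neighbor $w$ of $v$. *)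

(* Defs.v *)
From HB Require Import structures.
From mathcomp Require Import all_boot all_order all_algebra all_field.
Set Implicit Arguments. Unset Strict Implicit. Unset Printing Implicit Defensive.
Import Order.TTheory GRing.Theory Num.Theory.
Local Open Scope ring_scope.

Section Graphs.
Variables (V : finType) (e : rel V).

Definition simple_graph : Prop := symmetric e /\ irreflexive e.

Definition connected_graph : Prop := forall u v : V, connect e u v.

Definition gdeg (v : V) : nat := #|[set w | e v w]|.

Definition biregular (c d : nat) : Prop :=
  exists S : {set V},
    [/\ forall u v, e u v -> (u \in S) = (v \notin S),
        forall u, u \in S -> gdeg u = c
      & forall u, u \notin S -> gdeg u = d].

Definition edge_set : {set {set V}} :=
  [set E : {set V} | [exists u, exists v, e u v && (E == [set u; v])]].

Definition arcs : {set V * V} := [set x : V * V | e x.1 x.2].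

Definition arc_of (i : 'I_#|arcs|) : V * V := @enum_val _ (mem arcs) i.

(* transition matrix of the simple random walk on arcs:
   (u,v) -> (v,w) with probability 1/deg v *)
Definition arc_walk : 'M[algC]_#|arcs| :=
  \matrix_(i, j) (if (arc_of i).2 == (arc_of j).1
                  then (gdeg (arc_of i).2)%:R^-1 else 0).

Definition adjacency : 'M[algC]_#|V| :=
  \matrix_(i, j) (e (enum_val i) (enum_val j))%:R.

End Graphs.

Definition eigen_list (N : nat) (M : 'M[algC]_N) (rs : seq algC) : Prop :=
  char_poly M = \prod_(r <- rs) ('X - r%:P).

(* Kemeny's constant computed from an eigenvalue list rho_1 = 1, rho_2, ..., rho_N *)
Definition kemeny_of_eigs (rs : seq algC) : algC :=
  \sum_(1 <= i < size rs) (1 - rs`_i)^-1.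

(* Main.v *)
Require Import Defs.
From HB Require Import structures.
From mathcomp Require Import all_boot all_order all_algebra all_field.
From mathcomp Require Import ring.
Import Order.TTheory GRing.Theory Num.Theory.
Local Open Scope ring_scope.
Set Implicit Arguments. Unset Strict Implicit. Unset Printing Implicit Defensive.

Lemma sylvester (R : comNzRingType) (N n : nat) (B1 : 'M[R]_(N, n)) (B2 : 'M[R]_(n, N)) (x : R) :
  x ^+ n * \det (x%:M - B1 *m B2) = x ^+ N * \det (x%:M - B2 *m B1).
Proof.
pose Blk := block_mx (x%:M : 'M_N) B1 B2 (1%:M : 'M_n).
have h1 : block_mx 1%:M 0 (- B2) (x%:M) *m Blk = block_mx (x%:M) B1 0 (x%:M - B2 *m B1).
  rewrite mulmx_block !mul1mx !mul0mx !addr0 mulmx1.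
  by rewrite mul_mx_scalar mul_scalar_mx mulNmx scalerN addNr addrC.
have h2 : Blk *m block_mx 1%:M 0 (- B2) 1%:M = block_mx (x%:M - B1 *m B2) B1 0 1%:M.
  by rewrite mulmx_block !mulmx1 !mulmx0 !add0r mul1mx mulmxN subrr.
have := congr1 determinant h1; rewrite det_mulmx det_lblock det_ublock det1 mul1r !det_scalar.
have := congr1 determinant h2; rewrite det_mulmx det_lblock det_ublock !det1 !mulr1 => -> ->.
done.
Qed.

Lemma cp_sylvester (N n : nat) (M1 : 'M[algC]_(N, n)) (M2 : 'M[algC]_(n, N)) :
  'X ^+ n * char_poly (M1 *m M2) = 'X ^+ N * char_poly (M2 *m M1).
Proof.
rewrite /char_poly /char_poly_mx !map_mxM.
exact: sylvester.
Qed.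

Lemma prod_const_seq (R : comNzRingType) (rs : seq algC) (x : R) :
  \prod_(r <- rs) x = x ^+ size rs.
Proof. by elim: rs => [|r rs IH]; rewrite ?big_nil ?big_cons ?IH ?exprS. Qed.

Lemma eigen_list_scale (N : nat) (M : 'M[algC]_N) (rs : seq algC) (a : algC) :
  a != 0 -> eigen_list M rs -> eigen_list (a *: M) (map ( *%R a) rs).
Proof.
move=> a0; rewrite /eigen_list => hM.
have hs : size rs = N.
  by have := size_char_poly M; rewrite hM size_prod_XsubC => -[].
pose q : {poly algC} := a^-1%:P * 'X.
have E : char_poly_mx (a *: M) = a%:P *: map_mx (comp_poly q) (char_poly_mx M).
  apply/matrixP => i j; rewrite /char_poly_mx !mxE.
  case: (i == j); rewrite /= ?mulr1n ?mulr0n.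
    rewrite comp_polyB comp_polyX comp_polyC mulrBr /q mulrA -polyCM mulfV // mul1r.
    by rewrite polyCM.
  rewrite !sub0r (_ : - (M i j)%:P \Po q = - (M i j)%:P); last by rewrite -polyCN comp_polyC.
  by rewrite mulrN polyCM.
rewrite /char_poly E detZ det_map_mx -/(char_poly M) hM rmorph_prod.
rewrite -hs -prod_const_seq -big_split big_map; apply: eq_bigr => r _ /=.
rewrite comp_polyB comp_polyX comp_polyC mulrBr mulrA -polyCM mulfV // mul1r.
by rewrite polyCM.
Qed.

Lemma arcs_card (V : finType) (e : rel V) :
  symmetric e -> irreflexive e -> #|arcs e| = (2 * #|edge_set e|)%N.
Proof.
move=> es ei.
rewrite -sum1_card (partition_big (fun x : V * V => [set x.1; x.2]) (mem (edge_set e))) /=; last first.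
  move=> [x1 x2]; rewrite !inE /= => exy; apply/existsP; exists x1; apply/existsP; exists x2.
  by rewrite exy eqxx.
rewrite mulnC -sum_nat_const; apply: eq_bigr => E.
rewrite inE => /existsP [u /existsP [v /andP [euv /eqP ->]]].
have uv : u != v by apply: contraTneq euv => ->; rewrite ei.
have -> : 2%N = ((u, v) != (v, u)).+1 by rewrite xpair_eqE (negbTE uv).
rewrite sum1_card -cards2; apply: eq_card => [[x1 x2]]; rewrite !inE /= !xpair_eqE.
rewrite unfold_in /= inE /=.
apply/idP/idP.
  move=> /andP [ex /eqP eqs].
  have x12 : x1 != x2 by apply: contraTneq ex => ->; rewrite ei.
  have h1 : x1 \in [set u; v] by rewrite -eqs set21.
  have h2 : x2 \in [set u; v] by rewrite -eqs set22.
  move: h1 h2 x12; rewrite !in_set2 => /orP[]/eqP-> /orP[]/eqP->; rewrite ?eqxx //=.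
  by rewrite eq_sym (negbTE uv) andbF.
case/orP => /andP[/eqP-> /eqP->]; first by rewrite euv eqxx.
by rewrite es euv setUC eqxx.
Qed.

Lemma sum_pick (T : finType) (A : {pred T}) (y : T) (G : T -> algC) :
  \sum_(x in A) (x == y)%:R * G x = (y \in A)%:R * G y.
Proof.
case yA: (y \in A).
  rewrite (bigD1 y) //= eqxx mul1r big1 ?addr0 ?mul1r // => x /andP [_ /negPf ->].
  by rewrite mul0r.
rewrite mul0r big1 // => x xA; case: eqP => [exy|]; last by rewrite mul0r.
by rewrite exy yA in xA.
Qed.

Section G.
Variables (V : finType) (e : rel V) (c d : nat) (S : {set V}).
Hypothesis (esymm : symmetric e).
Hypothesis (hS : forall u v, e u v -> (u \in S) = (v \notin S)).
Hypothesis (hc : forall u, u \in S -> gdeg e u = c).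
Hypothesis (hd : forall u, u \notin S -> gdeg e u = d).
Hypothesis (c0 : (0 < c)%N) (d0 : (0 < d)%N).

Let s : algC := sqrtC (c * d)%:R.
Let t (x : V) : algC := if x \in S then c%:R else s.

Lemma s_neq0 : s != 0.
Proof. by rewrite /s sqrtC_eq0 pnatr_eq0 -lt0n muln_gt0 c0 d0. Qed.

Lemma t_neq0 x : t x != 0.
Proof. rewrite /t; case: ifP => _; [by rewrite pnatr_eq0 -lt0n | exact: s_neq0]. Qed.

Lemma ss : s * s = (c * d)%:R.
Proof. by rewrite -expr2 sqrtCK. Qed.

Definition M1 : 'M[algC]_(#|arcs e|, #|V|) :=
  \matrix_(i, k) (((@arc_of _ e i).2 == enum_val k)%:R / t (enum_val k)).
Definition M2 : 'M[algC]_(#|V|, #|arcs e|) :=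
  \matrix_(k, j) ((enum_val k == (@arc_of _ e j).1)%:R *
                  (s * t (enum_val k) / (gdeg e (enum_val k))%:R)).

Lemma M12 : M1 *m M2 = s *: arc_walk e.
Proof.
apply/matrixP => i j; rewrite !mxE.
under eq_bigr do rewrite !mxE.
rewrite -(@big_enum_val _ _ _ _ _ (fun x => ((@arc_of _ e i).2 == x)%:R / t x *
   ((x == (@arc_of _ e j).1)%:R * (s * t x / (gdeg e x)%:R)))) /=.
rewrite (eq_bigr (fun x => (x == (arc_of i).2)%:R * ((x == (arc_of j).1)%:R * (s * t x / (gdeg e x)%:R) / t x))); last first.
  by move=> x _; rewrite [in RHS]eq_sym; ring.
rewrite sum_pick inE mul1r.
case: eqP => [->|_]; last by rewrite !mul0r mulr0.
by rewrite mul1r mulrAC mulfK ?t_neq0.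
Qed.

Lemma M21 : M2 *m M1 = adjacency e.
Proof.
apply/matrixP => k l; rewrite !mxE.
under eq_bigr do rewrite !mxE.
set k' := enum_val k; set l' := enum_val l.
rewrite -(@big_enum_val _ _ _ _ _ (fun x => (k' == x.1)%:R * (s * t k' / (gdeg e k')%:R) *
     ((x.2 == l')%:R / t l'))) /=.
rewrite (eq_bigr (fun x => (x == (k', l'))%:R * (s * t k' / (gdeg e k')%:R / t l'))); last first.
  move=> [x1 x2] _ /=; rewrite xpair_eqE (eq_sym x1).
  by case: (k' == x1); case: (x2 == l'); rewrite /= ?mul0r ?mulr0 ?mul1r ?mulr1 ?mulrA ?mul0r.
rewrite sum_pick inE /=.
case ekl: (e k' l'); last by rewrite mul0r.
rewrite mul1r /t.
have := hS ekl; case kS: (k' \in S) => /esym lS.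
  rewrite (negbTE lS) (hc kS) /=.
  by rewrite mulfK ?divff ?s_neq0 // pnatr_eq0 -lt0n.
rewrite (negbFE lS) (hd (negbT kS)) -/s ss.
by rewrite natrM mulfK ?divff // pnatr_eq0 -lt0n.
Qed.

Let phi (x : V) : algC := if x \in S then s else d%:R.

Lemma s_ge0 : 0 <= s.
Proof. by rewrite /s sqrtC_ge0 ler0n. Qed.

Lemma phi_gt0 x : 0 < phi x.
Proof.
rewrite /phi; case: ifP => _; last by rewrite ltr0n.
by rewrite lt_def s_neq0 s_ge0.
Qed.

Lemma sum_nbr (y : V) (f : V -> algC) :
  \sum_(x : V) (e y x)%:R * f x = \sum_(x | e y x) f x.
Proof.
rewrite [RHS]big_mkcond /=; apply: eq_bigr => x _.
by case: (e y x); rewrite ?mul1r ?mul0r.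
Qed.

Lemma rowsum (k : 'I_#|V|) :
  \sum_l adjacency e k l * phi (enum_val l) = s * phi (enum_val k).
Proof.
under eq_bigr do rewrite mxE.
rewrite -(@big_enum_val _ _ _ _ _ (fun x => (e (enum_val k) x)%:R * phi x)) /=.
rewrite sum_nbr.
set y := enum_val k.
have cardE : #|[pred x | e y x]| = gdeg e y by rewrite /gdeg cardsE.
case yS: (y \in S).
  rewrite (eq_bigr (fun _ => d%:R)); last first.
    by move=> x exy; move: (hS exy); rewrite yS /phi; case: (x \in S).
  by rewrite sumr_const cardE (hc yS) /phi yS ss natrM mulr_natl.
rewrite (eq_bigr (fun _ => s)); last first.
  by move=> x exy; move: (hS exy); rewrite yS /phi; case: (x \in S).
by rewrite sumr_const cardE (hd (negbT yS)) /phi yS mulr_natr.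
Qed.

Lemma adj_sym (k l : 'I_#|V|) : adjacency e k l = adjacency e l k.
Proof. by rewrite !mxE esymm. Qed.

Lemma adj_ge0 (k l : 'I_#|V|) : 0 <= adjacency e k l.
Proof. by rewrite mxE ler0n. Qed.

Lemma s_root (n0 : (0 < #|V|)%N) : root (char_poly (adjacency e)) s.
Proof.
rewrite -eigenvalue_root_char; apply/eigenvalueP.
exists (\row_k phi (enum_val k)).
  apply/matrixP => i l; rewrite !mxE.
  under eq_bigr do rewrite mxE adj_sym mulrC.
  by rewrite rowsum.
apply/eqP => /matrixP /(_ 0 (Ordinal n0)); rewrite !mxE => /eqP.
by rewrite gt_eqF ?phi_gt0.
Qed.

Lemma eig_le_s (a : algC) : 0 <= a -> root (char_poly (adjacency e)) a -> a <= s.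
Proof.
move=> a0; rewrite -eigenvalue_root_char => /eigenvalueP [v hv vn0].
have key l : a * `|v 0 l| <= \sum_k `|v 0 k| * adjacency e k l.
  have := congr1 (fun M : 'rV[algC]_#|V| => `|M 0 l|) hv; rewrite /= !mxE normrM ger0_norm // => <-.
  apply: le_trans (ler_norm_sum _ _ _) _; apply: ler_sum => k _.
  by rewrite normrM (ger0_norm (adj_ge0 _ _)).
pose Q := \sum_l phi (enum_val l) * `|v 0 l|.
have Qpos : 0 < Q.
  have [k vk] : exists k, v 0 k != 0.
    apply/existsP; rewrite -negb_forall; apply: contra vn0 => /forallP h.
    by apply/eqP/matrixP => i j; rewrite (ord1 i) mxE; apply/eqP/h.
  rewrite /Q (bigD1 k) //=; apply: ltr_pwDl.
    by apply: mulr_gt0; rewrite ?phi_gt0 ?normr_gt0.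
  by apply: sumr_ge0 => i _; apply: mulr_ge0; rewrite ?normr_ge0 ?ltW ?phi_gt0.
have : a * Q <= s * Q.
  rewrite /Q !mulr_sumr.
  apply: (@le_trans _ _ (\sum_l phi (enum_val l) * \sum_k `|v 0 k| * adjacency e k l)).
    apply: ler_sum => l _; rewrite mulrCA; apply: ler_wpM2l; first by rewrite ltW ?phi_gt0.
    exact: key.
  under eq_bigr do rewrite mulr_sumr.
  rewrite exchange_big /=; rewrite le_eqVlt; apply/orP; left; apply/eqP; apply: eq_bigr => k _.
  rewrite mulrA -rowsum mulr_suml; apply: eq_bigr => l _.
  ring.
by rewrite ler_pM2r.
Qed.
End G.


Lemma prod_nseq0 (k : nat) : \prod_(r <- nseq k (0 : algC)) ('X - r%:P) = 'X ^+ k.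
Proof. by elim: k => [|k IH]; rewrite ?big_nil //= big_cons IH subr0 exprS. Qed.

Lemma sum_nseq (k : nat) (x : algC) (F : algC -> algC) :
  \sum_(r <- nseq k x) F r = F x *+ k.
Proof. by elim: k => [|k IH]; rewrite ?big_nil //= big_cons IH mulrS. Qed.

Theorem lemma4p1 (V : finType) (e : rel V) (c d : nat)
  (rho lam : seq algC) :
  simple_graph e -> connected_graph e -> biregular e c d ->
  (0 < c)%N -> (0 < d)%N -> (0 < #|V|)%N ->
  (* rho_1 = 1, rho_2, ..., rho_N : eigenvalues of the arc walk *)
  eigen_list (arc_walk e) rho -> rho`_0 = 1 ->
  (* lambda_1 >= ... >= lambda_n : adjacency eigenvalues *)
  eigen_list (adjacency e) lam -> sorted (fun x y => y <= x) lam ->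
  kemeny_of_eigs rho =
    (2 * #|edge_set e|)%:R - (#|V|)%:R +
    \sum_(1 <= i < #|V|)
       sqrtC (c * d)%:R / (sqrtC (c * d)%:R - lam`_i).
Proof.
move=> [es ei] _ [S [hS hc hd]] c0 d0 n0 hrho rho0 hlam hsort.
set s := sqrtC (c * d)%:R.
have sn0 : s != 0 by exact: s_neq0.
have hP := eigen_list_scale sn0 hrho.
have hsyl := cp_sylvester (M1 e c d S) (M2 e c d S).
rewrite (M12 e S c0 d0) (M21 hS hc hd c0 d0) hP hlam -!prod_nseq0 -!big_cat in hsyl.
have hperm := prod_XsubC_eq hsyl.
pose h (x : algC) := (1 - x / s)^-1.
have hsum : \sum_(x <- nseq #|V| 0 ++ [seq s * i | i <- rho]) h x = \sum_(x <- nseq #|arcs e| 0 ++ lam) h x := perm_big _ hperm.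
rewrite !big_cat /= !sum_nseq big_map in hsum.
have h0 : h 0 = 1 by rewrite /h mul0r subr0 invr1.
rewrite h0 in hsum.
have hrho' : \sum_(r <- rho) h (s * r) = \sum_(r <- rho) (1 - r)^-1.
  by apply: eq_bigr => r _; rewrite /h (mulrC s) mulfK.
have hlam' : \sum_(r <- lam) h r = \sum_(r <- lam) s / (s - r).
  apply: eq_bigr => r _; rewrite /h.
  have -> : 1 - r / s = (s - r) / s by rewrite mulrBl divff.
  by rewrite invf_div.
rewrite hrho' hlam' in hsum.
have szlam : size lam = #|V|.
  by have := size_char_poly (adjacency e); rewrite hlam size_prod_XsubC => -[].
have szrho : (0 < size rho)%N.
  by case: rho rho0 {hrho hP hsyl hperm hsum hrho'} => //= /esym/eqP; rewrite oner_eq0.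
have lam0 : lam`_0 = s.
  case: lam hlam hsort szlam {hsyl hperm hsum hlam'} => [|x0 rest] hlam hsort szlam.
    by move: n0; rewrite -szlam.
  have sin : s \in x0 :: rest by rewrite -root_prod_XsubC -hlam (s_root es hS hc hd c0 d0 n0).
  have x0r : root (char_poly (adjacency e)) x0 by rewrite hlam root_prod_XsubC mem_head.
  have allr := order_path_min (fun y x z (h1 : y <= x) (h2 : z <= y) => le_trans h2 h1) hsort.
  have sx0 : s <= x0.
    move: sin; rewrite in_cons => /orP [/eqP -> //|sr].
    exact: (allP allr s sr).
  have x00 : 0 <= x0 by apply: le_trans sx0; rewrite /s sqrtC_ge0 ler0n.
  by apply/eqP; rewrite /= eq_le sx0 (eig_le_s hS hc hd c0 d0 x00 x0r).
rewrite /kemeny_of_eigs.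
have E1 : \sum_(r <- rho) (1 - r)^-1 = \sum_(1 <= i < size rho) (1 - rho`_i)^-1.
  by rewrite (big_nth 0) big_ltn // rho0 subrr invr0 add0r.
have E2 : \sum_(r <- lam) s / (s - r) = \sum_(1 <= i < #|V|) s / (s - lam`_i).
  by rewrite (big_nth 0) szlam big_ltn // lam0 subrr invr0 mulr0 add0r.
rewrite -E1 -E2.
have -> : \sum_(r <- rho) (1 - r)^-1 = #|arcs e|%:R + \sum_(r <- lam) s / (s - r) - #|V|%:R.
  by rewrite -hsum addrAC subrr add0r.
have -> : (#|arcs e|%:R : algC) = (2 * #|edge_set e|)%:R by rewrite (arcs_card es ei).
by rewrite addrAC.
Qed.
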